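(* Let $(X,\mathcal T,P,\leq,\{\sigma_x:x\in X\})$ be a $p$-symmetrically typed topological space for a type $p\in P$, and assume $\sigma$ has least $p$-neighborhood. Then for every $x\in X$: (1) for every $y\in X$, $y\in p\vdash CL_1(\{x\})$ iff $x\in p\vdash CL_1(\{y\})$; (2) $p\vdash C(x)=p\vdash tr(\{x\})$; (3) for every $y\in p\vdash tr(\{x\})$, $p\vdash tr(\{x\})=p\vdash tr(\{y\})$.
   Context: A typed topological space $(X,\mathcal T,P,\leq,\{\sigma_x:x\in X\})$ consists of a topological space $(X,\mathcal T)$, a partially ordered set $(P,\leq)$ of types, and for each $x\in X$ a partial function $\sigma_x:\{O\in\mathcal T:x\in O\}\to P$ such that for all $U,V$ in its domain, $\sigma_x(U)\leq\sigma_x(V)$ iff $U\subseteq V$. $U$ is a type-$p$ neighborhood of $x$ ($p\vdash U(x)$) if $U$ is in the domain of $\sigma_x$ and $\sigma_x(U)=p$. $x$ is a $p$-accumulation point of $A$ if every type-$p$ neighborhood of $x$ meets $A$. $p\vdash CL_1(A)=A\cup\{p\text{-accumulation points of }A\}$, $p\vdash CL_n(A)=p\vdash CL_1(p\vdash CL_{n-1}(A))$, $p\vdash tr(A)=\bigcup_{n\ge1}p\vdash CL_n(A)$. $\sigma$ has least $p$-neighborhood if every $x$ has a type-$p$ neighborhood $p\vdash U_{min}(x)$ contained in every type-$p$ neighborhood of $x$. $X$ is $p$-symmetrically typed if for any $x,y\in X$ such that $y\notin U$ for some type-$p$ neighborhood $U$ of $x$, there is a type-$p$ neighborhood $V$ of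 $y$ with $x\notin V$. A set $A$ is type-$p$-connected if there do not exist families of type-$p$ neighborhoods $\{p\vdash U(x_i):i\in I\}$, $\{p\vdash U(x_j):j\in J\}$ with $I,J\neq\emptyset$, $A=\{x_i:i\in I\}\cup\{x_j:j\in J\}$ and $\bigcup_{i\in I}U(x_i)\cap\bigcup_{j\in J}U(x_j)=\emptyset$. $p\vdash C(x)$ is the union of all type-$p$-connected sets containing $x$. *)

(* Defs.v *)
From HB Require Import structures.
From mathcomp Require Import all_boot all_order.
From mathcomp Require Import all_classical topology.
Set Implicit Arguments. Unset Strict Implicit. Unset Printing Implicit Defensive.
Local Open Scope classical_set_scope.
Local Open Scope order_scope.

Section Typed.
Context {d : Order.disp_t} {X : topologicalType} {P : porderType d}.
(* sigma x is the partial function sigma_x : {O open | x \in O} -> P,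
   encoded as an option-valued function on all subsets of X. *)
Variable sigma : X -> set X -> option P.

Definition typed_space : Prop :=
  (forall x U q, sigma x U = Some q -> open U /\ U x) /\
  (forall x U V q r, sigma x U = Some q -> sigma x V = Some r ->
      (q <= r <-> U `<=` V)).

Definition type_nbhd (p : P) (x : X) (U : set X) : Prop := sigma x U = Some p.

Definition p_acc_point (p : P) (A : set X) (x : X) : Prop :=
  forall U, type_nbhd p x U -> U `&` A !=set0.

Definition CL1 (p : P) (A : set X) : set X := A `|` p_acc_point p A.

(* CLn p n A = p |- CL_n(A) for n >= 1 (CLn p 0 A = A) *)
Definition CLn (p : P) (n : nat) (A : set X) : set X := iter n (CL1 p) A.

Definition tr (p : P) (A : set X) : set X :=
  [set y | exists n : nat, (1 <= n)%N /\ CLn p n A y].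

Definition has_least_nbhd (p : P) : Prop :=
  forall x, exists Umin, type_nbhd p x Umin /\
    (forall U, type_nbhd p x U -> Umin `<=` U).

Definition p_symmetric (p : P) : Prop :=
  forall x y, (exists U, type_nbhd p x U /\ ~ U y) ->
    exists V, type_nbhd p y V /\ ~ V x.

Definition type_connected (p : P) (A : set X) : Prop :=
  ~ exists (I J : Type) (xi : I -> X) (Ui : I -> set X)
           (xj : J -> X) (Uj : J -> set X),
      inhabited I /\ inhabited J /\
      (forall i, type_nbhd p (xi i) (Ui i)) /\
      (forall j, type_nbhd p (xj j) (Uj j)) /\
      A = range xi `|` range xj /\
      (\bigcup_i Ui i) `&` (\bigcup_j Uj j) = set0.

Definition type_component (p : P) (x : X) : set X :=
  [set y | exists A, type_connected p A /\ A x /\ A y].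

End Typed.

(* Main.v *)
Require Import Defs.
From HB Require Import structures.
From mathcomp Require Import all_boot all_order.
From mathcomp Require Import all_classical topology.
Local Open Scope classical_set_scope.

Section Aux.
Local Set Implicit Arguments.
Context {d : Order.disp_t} {X : topologicalType} {P : porderType d}.
Variable sigma : X -> set X -> option P.
Variable p : P.
Hypothesis Ht : typed_space sigma.
Hypothesis Hs : p_symmetric sigma p.
Hypothesis Hl : has_least_nbhd sigma p.

Lemma nb_uniq x U V : type_nbhd sigma p x U -> type_nbhd sigma p x V -> U = V.
Proof.
move=> hU hV; case: Ht => _ H2.
apply/seteqP; split.
  exact: (proj1 (H2 _ _ _ p p hU hV) (Order.POrderTheory.lexx p)).
exact: (proj1 (H2 _ _ _ p p hV hU) (Order.POrderTheory.lexx p)).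
Qed.

Lemma nb_mem x U : type_nbhd sigma p x U -> U x.
Proof. by move=> h; case: Ht => H1 _; case: (H1 _ _ _ h). Qed.

Definition Rel (a b : X) := exists U, type_nbhd sigma p b U /\ U a.

Lemma Rel_refl a : Rel a a.
Proof. have [U [hU _]] := Hl a; exists U; split => //; exact: nb_mem. Qed.

Lemma Rel_sym a b : Rel a b -> Rel b a.
Proof.
move=> [U [hU Ua]]; have [V [hV _]] := Hl a; exists V; split => //.
apply: contrapT => nV.
have [W [hW nW]] := Hs (ex_intro _ V (conj hV nV) : exists V0, type_nbhd sigma p a V0 /\ ~ V0 b).
by rewrite (nb_uniq hW hU) in nW.
Qed.

Lemma CL1E A b : CL1 sigma p A b <-> A b \/ exists a, A a /\ Rel a b.
Proof.
split.
- case=> [h|h]; [by left|right].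
  have [U [hU _]] := Hl b; have [a [Ua Aa]] := h U hU.
  by exists a; split => //; exists U.
- case=> [h|[a [Aa [U [hU Ua]]]]]; [by left|right].
  move=> V hV; rewrite -(nb_uniq hU hV); by exists a.
Qed.

Lemma tr_sub A : A `<=` tr sigma p A.
Proof. move=> a Aa; exists 1%N; split => //=; by left. Qed.

Lemma tr_closed A a b : tr sigma p A a -> Rel a b -> tr sigma p A b.
Proof.
move=> [n [_ hn]] hr; exists n.+1; split => //=.
apply/CL1E; right; by exists a.
Qed.

Lemma tr_min A S : A `<=` S -> (forall a b, S a -> Rel a b -> S b) ->
  tr sigma p A `<=` S.
Proof.
move=> hA hS y [n [_ hn]]; elim: n y hn => [|n IH] y /= hy; first exact: hA.
move/CL1E: hy => [h|[a [ha hr]]]; first exact: IH.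
exact: (hS a y (IH a ha) hr).
Qed.

Lemma tr_self x : tr sigma p [set x] x.
Proof. exact: tr_sub. Qed.

Lemma tr_sym x y : tr sigma p [set x] y -> tr sigma p [set y] x.
Proof.
move=> h.
have: [set z | tr sigma p [set z] x] y; last by [].
apply: (tr_min _ _ h).
  by move=> z ->; exact: tr_self.
move=> a b /= ha hr.
have hb : tr sigma p [set b] a by apply: (tr_closed (tr_self b)); exact: Rel_sym.
apply: (tr_min _ _ ha); first by move=> z ->.
move=> u v; exact: tr_closed.
Qed.

Lemma tr_sub_of x y : tr sigma p [set x] y -> tr sigma p [set y] `<=` tr sigma p [set x].
Proof.
move=> h; apply: tr_min; first by move=> z ->.
move=> u v; exact: tr_closed.
Qed.

End Aux.

Theorem theorem2p18 (d : Order.disp_t) (X : topologicalType) (P : porderType d)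
    (sigma : X -> set X -> option P) (p : P) :
  typed_space sigma -> p_symmetric sigma p -> has_least_nbhd sigma p ->
  forall x : X,
    (forall y : X, CL1 sigma p [set x] y <-> CL1 sigma p [set y] x) /\
    type_component sigma p x = tr sigma p [set x] /\
    (forall y : X, tr sigma p [set x] y -> tr sigma p [set x] = tr sigma p [set y]).
Proof.
move=> Ht Hs Hl x.
have trc := tr_closed Ht Hl. have rs := Rel_sym Ht Hs Hl. have trm := tr_min Ht Hl. have nbm := nb_mem Ht.
have H3 : forall y : X, tr sigma p [set x] y -> tr sigma p [set x] = tr sigma p [set y].
  move=> y h; apply/seteqP; split; last exact: tr_sub_of.
  exact: (tr_sub_of Ht Hl (tr_sym Ht Hs Hl h)).
split; [|split; last exact: H3].
- move=> y; split => /(CL1E Ht Hl) => [[->|[a [-> hr]]]|[->|[a [-> hr]]]];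
    apply/(CL1E Ht Hl); try by left.
  + by right; exists y; split => //; apply: rs.
  + by right; exists x; split => //; apply: rs.
- apply/seteqP; split.
  + move=> y [A [hA [Ax Ay]]]; apply: contrapT => ny; apply: hA.
    pose I := {a : X & {U : set X | (A a /\ tr sigma p [set x] a) /\ type_nbhd sigma p a U}}.
    pose J := {a : X & {U : set X | (A a /\ ~ tr sigma p [set x] a) /\ type_nbhd sigma p a U}}.
    exists I, J, (fun i : I => projT1 i), (fun i : I => proj1_sig (projT2 i)),
      (fun j : J => projT1 j), (fun j : J => proj1_sig (projT2 j)).
    split.
      have [U [hU _]] := Hl x.
      by constructor; exists x; exists U; split => //; split => //; apply: tr_self.
    split.
      have [U [hU _]] := Hl y.
      by constructor; exists y; exists U; split.
    split; first by move=> i; exact: (proj2 (proj2_sig (projT2 i))).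
    split; first by move=> i; exact: (proj2 (proj2_sig (projT2 i))).
    split.
      apply/seteqP; split.
        move=> a Aa; have [U [hU _]] := Hl a.
        have [t|t] := pselect (tr sigma p [set x] a).
          by left; exists (existT _ a (exist _ U (conj (conj Aa t) hU))).
        by right; exists (existT _ a (exist _ U (conj (conj Aa t) hU))).
      move=> a [[i _ <-]|[i _ <-]]; exact: (proj1 (proj1 (proj2_sig (projT2 i)))).
    apply/seteqP; split => // z [[i _ /= Uz] [j _ /= Vz]].
    have ta := proj2 (proj1 (proj2_sig (projT2 i))).
    have hU := proj2 (proj2_sig (projT2 i)).
    have tb := proj2 (proj1 (proj2_sig (projT2 j))).
    have hV := proj2 (proj2_sig (projT2 j)).
    move: ta hU tb hV Uz Vz; move: (projT1 i) (proj1_sig (projT2 i)) (projT1 j) (proj1_sig (projT2 j)).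
    move=> a U b V ta hU tb hV Uz Vz.
    apply: tb.
    have ra : Rel sigma p z a by exists U.
    have rb : Rel sigma p z b by exists V.
    apply: (trc _ _ _ _ rb); apply: (trc _ _ _ ta); exact: rs.
  + move=> y hy; exists (tr sigma p [set x]); split; last by split => //; apply: tr_self.
    move=> [I [J [xi [Ui [xj [Uj [[i0] [[j0] [hi [hj [hA hD]]]]]]]]]]].
    pose L := \bigcup_i Ui i.
    have a1A : tr sigma p [set x] (xi i0) by rewrite hA; left; exists i0.
    have E := H3 _ a1A.
    have sub : tr sigma p [set xi i0] `<=` [set z | tr sigma p [set x] z /\ L z].
      apply: trm; first by move=> z ->; split => //; exists i0 => //; apply: nbm.
      move=> a b [ta La] rab; have tb := trc _ _ _ ta rab.
      move: rab => [U [hU Ua]].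
      split => //; move: tb; rewrite hA => [[[i _ <-]|[j _ eb]]].
        by exists i => //; apply: nbm.
      move: hU; rewrite -eb => hU.
      have : (\bigcup_i Ui i `&` \bigcup_j Uj j)%O a.
        by split => //; exists j => //; rewrite (nb_uniq Ht hU (hj j)) in Ua.
      by rewrite hD.
    have b0A : tr sigma p [set x] (xj j0) by rewrite hA; right; exists j0.
    have : (\bigcup_i Ui i `&` \bigcup_j Uj j)%O (xj j0).
      split; first by apply: (proj2 (sub _ _)); rewrite -E.
      by exists j0 => //; apply: nbm.
    by rewrite hD.
Qed.
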